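(* There exists a finite game $G$ such that $\mathcal{X}^{CCE}\not\subseteq\mathcal{X}^{PS\text{-}NF}$, i.e. some coarse correlated equilibrium $x$ of $G$ is not equal to $x_\varnothing$ for any perfectly stable $\mathbf{x}=[x_\pi]$ of the Stackelberg game $(G,N,\emptyset)$.
   Context: A finite game is $G=(N,\{S_p\}_{p\in N},\{u_p\}_{p\in N})$ with players $N=\{1,\dots,n\}$, finite nonempty strategy sets $S_p$, and utilities $u_p:S\to\mathbb{R}$ on $S=\prod_{p\in N}S_p$; write $s=(s_p,s_{-p})$ with $s_{-p}\in S_{-p}=\prod_{q\neq p}S_q$. $\mathcal{X}=\Delta(S)$ is the set of probability distributions on $S$ and $u_p(x)=\sum_{s\in S}x(s)u_p(s)$ for $x\in\mathcal{X}$. For $P\subseteq N$, $\mathcal{X}^{CE}_P$ is the set of $x\in\mathcal{X}$ such that for every $p\in P$ and all $s_p\neq s_p'\in S_p$: $\sum_{s_{-p}\in S_{-p}} x(s_p,s_{-p})\,(u_p(s_p,s_{-p})-u_p(s_p',s_{-p}))\ge 0$; $\mathcal{X}^{CE}=\mathcal{X}^{CE}_N$ is the set of correlated equilibria of $G$. $\mathcal{X}^{CCE}$ is the set of coarse correlated equilibria of $G$: $x\in\mathcal{X}$ with $\sum_{s\in S}x(s)(u_p(s)-u_p(s_p',s_{-p}))\ge 0$ for all $p\in N$, $s_p'\in S_p$. A Stackelberg game (SG) is a triple $(G,L,F)$ with $L\cup F=N$ and $L\cap F=\emptyset$ (leaders and followers). For $P\subseteq N$, $\Pi_P$ is the set of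 ordered subsets of $P$ (finite sequences of pairwise distinct elements of $P$, including the empty sequence $\varnothing$); for $\pi\in\Pi_P$ and $p\in P$ not occurring in $\pi$, $\pi p$ is $\pi$ with $p$ appended; when used as a set, $\pi$ means its set of entries. $\mathbf{X}=\prod_{\pi\in\Pi_L}\mathcal{X}^{CE}_{\pi\cup F}$, with elements $\mathbf{x}=[x_\pi]_{\pi\in\Pi_L}$. For $\mathbf{x}\in\mathbf{X}$ and $\pi\in\Pi_L$, $x_\pi$ is stable if $u_p(x_\pi)\ge u_p(x_{\pi p})$ for all $p\in L\setminus\pi$; $\mathbf{x}$ is stable if $x_\varnothing$ is stable, and perfectly stable if $x_\pi$ is stable for every $\pi\in\Pi_L$; $\mathbf{X}^{S}$ and $\mathbf{X}^{PS}$ denote the sets of stable and perfectly stable elements of $\mathbf{X}$. $\mathcal{X}^{S\text{-}NF}=\{x_\varnothing:\mathbf{x}\in\mathbf{X}^S\}$ and $\mathcal{X}^{PS\text{-}NF}=\{x_\varnothing:\mathbf{x}\in\mathbf{X}^{PS}\}$ computed for the SG $(G,N,\emptyset)$ in which every player is a leader. *)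

(* Defs.v *)
From HB Require Import structures.
From mathcomp Require Import all_boot all_order all_algebra.
Set Implicit Arguments. Unset Strict Implicit. Unset Printing Implicit Defensive.
Import Order.TTheory GRing.Theory Num.Theory.
Local Open Scope ring_scope.

(* Strategies of every player are drawn
   from a common finite ambient type T; player p's strategy set is the
   nonempty finite set [strat p].  A strategy profile is an element of
   {ffun 'I_n -> T} whose p-th coordinate lies in [strat p]. *)
Record game (R : realFieldType) := Game {
  nplayers : nat;
  stratT : finType;
  strat : 'I_nplayers -> {set stratT};
  strat_nonempty : forall p, strat p != set0;
  util : 'I_nplayers -> {ffun 'I_nplayers -> stratT} -> R
}.
Arguments strat {R} g p.
Arguments util {R} g p s.
Arguments stratT {R} g.
Arguments nplayers {R} g.

Section Game.
Variables (R : realFieldType) (G : game R).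

Definition player := 'I_(nplayers G).
Definition prof := {ffun player -> stratT G}.

Definition valid (s : prof) : bool := [forall p, s p \in strat G p].

Definition dev (s : prof) (p : player) (a : stratT G) : prof :=
  [ffun q => if q == p then a else s q].

Definition is_dist (x : {ffun prof -> R}) : Prop :=
  (forall s, 0 <= x s) /\ (forall s, ~~ valid s -> x s = 0) /\
  \sum_(s | valid s) x s = 1.

Definition eutil (p : player) (x : {ffun prof -> R}) : R :=
  \sum_(s | valid s) x s * util G p s.

Definition CE_P (P : {set player}) (x : {ffun prof -> R}) : Prop :=
  is_dist x /\
  forall p, p \in P -> forall a b, a \in strat G p -> b \in strat G p -> a != b ->
    0 <= \sum_(s | valid s && (s p == a)) x s * (util G p s - util G p (dev s p b)).

Definition CCE (x : {ffun prof -> R}) : Prop :=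
  is_dist x /\
  forall p b, b \in strat G p ->
    0 <= \sum_(s | valid s) x s * (util G p s - util G p (dev s p b)).

Definition ordsub (L : {set player}) (pi : seq player) : bool :=
  uniq pi && all (fun p => p \in L) pi.

(* bold X: families [x_pi]_{pi in Pi_L}, x_pi in X^CE_{pi u F}.
   Families are represented as functions on all sequences; only the values
   at ordered subsets of L matter. *)
Definition boldX (L F : {set player}) (xb : seq player -> {ffun prof -> R}) : Prop :=
  forall pi, ordsub L pi -> CE_P ([set p in pi] :|: F) (xb pi).

Definition stable_at (L : {set player}) (xb : seq player -> {ffun prof -> R})
  (pi : seq player) : Prop :=
  forall p, p \in L -> p \notin pi -> eutil p (xb (rcons pi p)) <= eutil p (xb pi).

Definition perfectly_stable (L F : {set player}) xb : Prop :=
  boldX L F xb /\ forall pi, ordsub L pi -> stable_at L xb pi.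

Definition PS_NF (x : {ffun prof -> R}) : Prop :=
  exists xb, perfectly_stable [set: player] set0 xb /\ xb [::] = x.

End Game.

(* Main.v *)
Require Import Defs.
From HB Require Import structures.
From mathcomp Require Import all_boot all_order all_algebra.
From mathcomp Require Import ring lra.
Set Implicit Arguments. Unset Strict Implicit. Unset Printing Implicit Defensive.
Import Order.TTheory GRing.Theory Num.Theory.

Section Ex.
Local Open Scope ring_scope.
Variable R : realFieldType.

Definition U (p a b : nat) : R :=
  (nth 0 (nth [::] (if p == 0 then [:: [:: 2; 1; 4]; [:: 1; 3; 0]; [:: 0; 0; 1]]
                    else [:: [:: 2; 3; 1]; [:: 2; 3; 1]; [:: 4; 2; 0]]) a) b)%N%:R.

Definition ut (p : 'I_2) (s : {ffun 'I_2 -> 'I_3}) : R :=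
  U p (s ord0) (s ord_max).

Lemma ne_setT : forall p : 'I_2, [set: 'I_3] != set0.
Proof. by move=> _; apply/set0Pn; exists ord0. Qed.

Definition G : game R := @Game R 2 (ordinal 3) (fun _ => setT) ne_setT ut.

Definition mk (a b : 'I_3) : {ffun 'I_2 -> 'I_3} := [ffun i => if i == ord0 then a else b].

Lemma mk0 a b : mk a b ord0 = a. Proof. by rewrite ffunE. Qed.
Lemma mk1 a b : mk a b ord_max = b. Proof. by rewrite ffunE. Qed.

Lemma mkK (s : {ffun 'I_2 -> 'I_3}) : mk (s ord0) (s ord_max) = s.
Proof.
apply/ffunP=> i; rewrite ffunE; case: ifP => [/eqP -> //|].
by case: i => [[|[|n]] Hi] //= _; congr (s _); apply/val_inj.
Qed.

Lemma sum_prof (f : {ffun 'I_2 -> 'I_3} -> R) :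
  \sum_s f s = \sum_(a : 'I_3) \sum_(b : 'I_3) f (mk a b).
Proof.
rewrite pair_big /=.
rewrite (reindex (fun ab : 'I_3 * 'I_3 => mk ab.1 ab.2)) //=.
exists (fun s => (s ord0, s ord_max)) => [[a b] _ | s _] /=.
  by rewrite mk0 mk1.
by rewrite mkK.
Qed.

Definition c0 : 'I_3 := @Ordinal 3 0 isT.
Definition c1 : 'I_3 := @Ordinal 3 1 isT.
Definition c2 : 'I_3 := @Ordinal 3 2 isT.

Lemma sum3 (g : 'I_3 -> R) : \sum_(a : 'I_3) g a = g c0 + g c1 + g c2.
Proof.
rewrite !big_ord_recr big_ord0 /= add0r.
by congr (g _ + g _ + g _); apply/val_inj.
Qed.

Lemma validT (s : prof G) : valid s.
Proof. by apply/forallP=> p; rewrite in_setT. Qed.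

Lemma sumG (Q : pred (prof G)) (f : prof G -> R) :
  \sum_(s | valid s && Q s) f s =
  \sum_(a : 'I_3) \sum_(b : 'I_3) (if Q (mk a b) then f (mk a b) else 0).
Proof.
rewrite (eq_bigl Q); last by move=> s; rewrite validT.
by rewrite big_mkcond /= (sum_prof (fun s => if Q s then f s else 0)).
Qed.

Lemma sumV (f : prof G -> R) :
  \sum_(s | valid s) f s = \sum_(a : 'I_3) \sum_(b : 'I_3) f (mk a b).
Proof.
rewrite (eq_bigl xpredT); last by move=> s; rewrite validT.
exact: sum_prof.
Qed.

Lemma dev0 a b a' : @dev R G (mk a b) ord0 a' = mk a' b.
Proof.
apply/ffunP=> i; rewrite !ffunE /=; by case: ifP => // ->.
Qed.

Lemma dev1 a b b' : @dev R G (mk a b) ord_max b' = mk a b'.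
Proof.
apply/ffunP=> i; rewrite !ffunE /=.
by case: i => [[|[|n]] Hi].
Qed.

Definition xt (a b : nat) : R :=
  match a, b with 0, 0 => 1/3 | 1, 1 => 1/3 | 2, 0 => 1/3 | _, _ => 0 end.
Definition xx : {ffun prof G -> R} := [ffun s : prof G => xt (s ord0) (s ord_max)].

Lemma I2cases (p : 'I_2) : p = ord0 \/ p = ord_max.
Proof. by case: p => [[|[|n]] Hi]; [left|right|]; try apply/val_inj. Qed.
Lemma I3cases (p : 'I_3) : p = c0 \/ p = c1 \/ p = c2.
Proof. by case: p => [[|[|[|n]]] Hi]; [left|right;left|right;right|]; try apply/val_inj. Qed.


Ltac expd K := rewrite ?sumG ?sumV !sum3 /= ?dev0 ?dev1 /ut /U ?ffunE ?mk0 ?mk1 /= in K.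

Ltac nonneg y0 :=
  have := y0 (mk c0 c0); have := y0 (mk c0 c1); have := y0 (mk c0 c2);
  have := y0 (mk c1 c0); have := y0 (mk c1 c1); have := y0 (mk c1 c2);
  have := y0 (mk c2 c0); have := y0 (mk c2 c1); have := y0 (mk c2 c2).

Ltac ce1 H p Hp a b := let K := fresh "K" in
  have K := H p Hp a b (in_setT _) (in_setT _) isT; expd K; move: K.

Ltac ceall H p Hp :=
  ce1 H p Hp c0 c1; ce1 H p Hp c0 c2; ce1 H p Hp c1 c0;
  ce1 H p Hp c1 c2; ce1 H p Hp c2 c0; ce1 H p Hp c2 c1.

Theorem main : exists G : game R, exists x : {ffun prof G -> R}, CCE x /\ ~ PS_NF x.
Proof.
exists G, xx; split.
  split.
    split; first by move=> s; rewrite ffunE; case: (val (s ord0)) => [|[|[|n]]];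
      case: (val (s ord_max)) => [|[|[|m]]] //=; rewrite ?divr_ge0 ?ler01 ?ler0n.
    split; first by move=> s; rewrite validT.
    rewrite sumV !sum3 ?ffunE ?mk0 ?mk1 /=; lra.
  move=> p b _; rewrite sumV !sum3.
  case: (I2cases p) => ->; case: (I3cases b) => [->|[->|->]];
    rewrite ?dev0 ?dev1 /= /ut /U ?ffunE ?mk0 ?mk1 /=; lra.
move=> [xb [[hX hS] hx]].
have o0 : ordsub [set: player G] [:: ord0] by rewrite /ordsub /= !in_setT.
have o01 : ordsub [set: player G] [:: ord0; ord_max] by rewrite /ordsub /= !in_setT.
have oe : ordsub [set: player G] [::] by [].
have [[y0 [_ y1]] Hy] := hX [:: ord0] o0.
have [[z0 [_ z1]] Hz] := hX [:: ord0; ord_max] o01.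
have S0 := hS [::] oe ord0 (in_setT _) isT.
have S1 := hS [:: ord0] o0 ord_max (in_setT _) isT.
rewrite /= hx /eutil in S0 S1.
expd S0; expd S1; expd y1; expd z1.
have in0 : (ord0 : player G) \in [set p in [:: (ord0 : player G)]] :|: set0 by rewrite !inE.
have in0' : (ord0 : player G) \in [set p in [:: (ord0 : player G); ord_max]] :|: set0 by rewrite !inE.
have in1' : (ord_max : player G) \in [set p in [:: (ord0 : player G); ord_max]] :|: set0 by rewrite !inE.
ceall Hy (ord0 : player G) in0.
ceall Hz (ord0 : player G) in0'.
ceall Hz (ord_max : player G) in1'.
nonneg y0. nonneg z0.
lra.
Qed.
End Ex.

Theorem mainTheorem16 (R : realFieldType) :
  exists G : game R, exists x : {ffun prof G -> R}, CCE x /\ ~ PS_NF x.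
Proof. exact: main. Qed.
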